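(* Let $G>0$, $a\ge\frac{3\pi G^2}{4}$, $\sigma^2=\pi/2$, and let $(\beta_t)_{t\ge1}$ be positive reals with $\beta_{t+1}\le\beta_t$ for all $t$. For $t\ge1$ define $f_t(x)=\beta_t\exp\big(\frac{x^2}{2at}\big)$. Then for every $t\ge1$, \[ \arg\max_{x\in\mathbb{R}}\ \Big(\mathbb{E}_{\phi\sim N(0,\sigma^2)}\big[f_{t+1}(x+\phi G)\big]-f_t(x)\Big)=0, \] i.e. the maximum over $x$ is attained at $x=0$. *)

(* Defs.v *)
From HB Require Import structures.
From mathcomp Require Import all_boot all_order all_algebra.
From mathcomp Require Import all_classical all_reals all_analysis.
Set Implicit Arguments. Unset Strict Implicit. Unset Printing Implicit Defensive.
Import Order.TTheory GRing.Theory Num.Theory.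
Local Open Scope ring_scope.

Definition ft {R : realType} (beta : nat -> R) (a : R) (t : nat) (x : R) : R :=
  beta t * expR (x ^+ 2 / (2 * a * t%:R)).

(* E_{phi ~ N(0, sigma^2)} [ f_{t+1}(x + phi G) ] - f_t(x), as an extended real;
   sigma is the standard deviation. *)
Definition objective {R : realType} (beta : nat -> R) (a G sigma : R) (t : nat)
  (x : R) : \bar R :=
  ((\int[normal_prob 0 sigma]_phi (ft beta a t.+1 (x + phi * G))%:E)
    - (ft beta a t x)%:E)%E.

(* Main.v *)
Require Import Defs.
From HB Require Import structures.
From mathcomp Require Import all_boot all_order all_algebra.
From mathcomp Require Import all_classical all_reals all_analysis.
From mathcomp Require Import measurable_realfun normal_distribution.
From mathcomp Require Import lra ring.
Import Order.TTheory GRing.Theory Num.Theory.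
Local Open Scope ring_scope.
Local Open Scope classical_set_scope.
Section integral_normal.
Context {R : realType} (m s : R).
Local Notation mu := (@lebesgue_measure R).
Import HBNNSimple.

Let integral_normal_indic E : measurable E ->
  (\int[normal_prob m s]_x (\1_E x)%:E =
   \int[mu]_x ((\1_E x)%:E * (normal_pdf m s x)%:E))%E.
Proof.
move=> mE; rewrite integral_indic//= /normal_prob setIT.
rewrite [LHS]integral_mkcond/=; apply: eq_integral => x _.
rewrite !patchE indicE; case: ifPn => xE; first by rewrite mul1e.
by rewrite mul0e.
Qed.

Let integral_normal_nnsfun (f : {nnsfun _ >-> R}) :
  (\int[normal_prob m s]_x (f x)%:E =
   \int[mu]_x ((f x)%:E * (normal_pdf m s x)%:E))%E.
Proof.
under [LHS]eq_integral do rewrite fimfunE -fsumEFin//.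
rewrite [LHS]ge0_integral_fsum//; last 2 first.
  - by move=> r; exact/measurable_EFinP/measurableT_comp.
  - by move=> n x _; rewrite EFinM nnfun_muleindic_ge0.
under [RHS]eq_integral.
  move=> x xD; rewrite fimfunE -fsumEFin// ge0_mule_fsuml; last first.
    by move=> r; rewrite EFinM nnfun_muleindic_ge0.
  over.
rewrite [RHS]ge0_integral_fsum//; last 2 first.
  - move=> r; apply/measurable_EFinP; apply: measurable_funM.
      by do 2 apply/measurableT_comp => //.
    exact: measurable_normal_pdf.
  - by move=> n x _; apply: mule_ge0; [rewrite EFinM nnfun_muleindic_ge0 | rewrite lee_fin normal_pdf_ge0].
apply: eq_fsbigr => r _.
have [r0|r0] := ltP r 0%R.
  rewrite preimage_nnfun0// !integral0_eq// => x _.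
    by rewrite indic0 mulr0 mul0e.
  by rewrite indic0 mulr0.
have mI : measurable_fun [set: R] (EFin \o (\1_(f @^-1` [set r]) : R -> R)).
  apply/measurable_EFinP/measurable_indic; exact: (measurable_funPTI f (measurable_set1 r)).
under eq_integral do rewrite EFinM.
rewrite ge0_integralZl //.
under [RHS]eq_integral do rewrite EFinM -muleA.
rewrite ge0_integralZl//.
- by rewrite integral_normal_indic//.
- apply: emeasurable_funM => //.
  by apply: measurableT_comp => //; exact: measurable_normal_pdf.
- by move=> t _; rewrite mule_ge0// lee_fin ?normal_pdf_ge0.
Qed.

Lemma integral_normal (f : _ -> \bar R) :
  measurable_fun setT f -> (forall x, 0 <= f x)%E ->
  (\int[normal_prob m s]_x f x = \int[mu]_x (f x * (normal_pdf m s x)%:E))%E.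
Proof.
move=> mf f0.
pose f_ := nnsfun_approx measurableT mf.
transitivity (lim (\int[normal_prob m s]_x (f_ n x)%:E @[n --> \oo])%E).
  rewrite -monotone_convergence//=.
  - apply: eq_integral => ? /[!inE] xD; apply/esym/cvg_lim => //=.
    exact: cvg_nnsfun_approx.
  - by move=> n; apply/measurable_EFinP; exact: measurable_funP.
  - by move=> n ? _; rewrite lee_fin.
  - by move=> ? _ ? ? mn; rewrite lee_fin; exact/lefP/nd_nnsfun_approx.
rewrite [RHS](_ : _ = lim
    (\int[mu]_x ((f_ n x)%:E * (normal_pdf m s x)%:E) @[n --> \oo])%E); last first.
  rewrite -monotone_convergence//=.
  - apply: eq_integral => x /[!inE] xD; apply/esym/cvg_lim => //.
    apply: cvgeMr => //; exact: cvg_nnsfun_approx.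
  - move=> n; apply/measurable_EFinP/measurable_funM.
      exact: measurable_funP.
    exact: measurable_normal_pdf.
  - by move=> n ? _; rewrite mule_ge0// lee_fin ?normal_pdf_ge0.
  - move=> ? _ ? ? ?; rewrite lee_wpmul2r// ?lee_fin ?normal_pdf_ge0//.
    exact/lefP/nd_nnsfun_approx.
by apply: congr_lim; apply/funext => n /=; exact: integral_normal_nnsfun.
Qed.

End integral_normal.
Section S.
Context {R : realType}.
Lemma mes (c0 G x : R) : measurable_fun [set: R] (fun phi => expR ((x + phi * G)^+2 / c0)).
Proof.
apply: measurableT_comp => //.
apply: measurable_funM => //.
apply: measurable_funX => //.
apply: measurable_funD => //.
exact: measurable_funM.
Qed.

Lemma pointwise (c0 G s x phi : R) : 0 < s -> 0 < c0 - 2 * G^+2 * s^+2 ->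
  let D2 := c0 - 2 * G^+2 * s^+2 in
  let w := s^+2 * c0 / D2 in
  let mu := 2 * x * G * s^+2 / D2 in
  expR ((x + phi * G)^+2 / c0) * normal_pdf 0 s phi =
  (normal_peak s / normal_peak (Num.sqrt w) * expR (x^+2 / D2)) * normal_pdf mu (Num.sqrt w) phi.
Proof.
move=> s0 D0 D2 w mu.
have c00 : 0 < c0.
  have : 0 <= 2 * G^+2 * s^+2 by apply: mulr_ge0; [apply: mulr_ge0 | ]; rewrite ?sqr_ge0.
  lra.
have w0 : 0 < w by rewrite divr_gt0 // mulr_gt0 // exprn_gt0.
have sw0 : Num.sqrt w != 0 by rewrite gt_eqF // sqrtr_gt0.
have sw2 : Num.sqrt w ^+ 2 = w by rewrite sqr_sqrtr // ltW.
rewrite !normal_pdfE ?gt_eqF // /normal_fun /=.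
match goal with |- context[expR (- (phi - mu) ^+ 2 / ?d)] =>
  have -> : d = w *+ 2 by congr (_ *+ 2); exact: sw2 end.
have q0 : normal_peak (Num.sqrt w) != 0 by rewrite gt_eqF // normal_peak_gt0.
have key : expR ((x + phi * G) ^+ 2 / c0) * expR (- (phi - 0) ^+ 2 / (s ^+ 2 *+ 2)) =
   expR (x ^+ 2 / D2) * expR (- (phi - mu) ^+ 2 / (w *+ 2)).
  rewrite -!expRD; congr expR.
  rewrite /w /mu /D2 subr0.
  field.
  by rewrite !gt_eqF.
rewrite mulrCA key.
field.
exact: q0.
by rewrite sqrtr_gt0.
Qed.
Lemma int_gauss (c0 G s x : R) : 0 < s -> 0 < c0 - 2 * G^+2 * s^+2 ->
 (\int[normal_prob 0 s]_phi (expR ((x + phi * G)^+2 / c0))%:E =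
  ((normal_peak s / normal_peak (Num.sqrt (s^+2 * c0 / (c0 - 2 * G^+2 * s^+2))))
    * expR (x^+2 / (c0 - 2 * G^+2 * s^+2)))%:E)%E.
Proof.
move=> s0 D0.
rewrite integral_normal; last 2 first.
- by apply/measurable_EFinP; exact: mes.
- by move=> ?; rewrite lee_fin expR_ge0.
under eq_integral do rewrite -EFinM pointwise // EFinM.
rewrite integralZl //; last exact: integrable_normal_pdf.
by rewrite integral_normal_pdf mule1.
Qed.
End S.

Lemma expR_conv (R : realType) (r y : R) : 0 <= r -> r <= 1 ->
  expR (r * y) <= r * expR y + (1 - r).
Proof.
move=> r0 r1.
have := convex_expR (Itv01 r0 r1) y 0.
rewrite !convRE /= mulr0 addr0 expR0 mulr1.
by [].
Qed.

Lemma final_ineq (R : realType) (bT bt K p q u : R) :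
  0 <= bT -> bT <= bt -> 0 <= K -> 0 < p -> p <= q -> K * p <= q -> 0 <= u ->
  bT * (K * expR (u * p)) - bt * expR (u * q) <= bT * (K * expR (0 * p)) - bt * expR (0 * q).
Proof.
move=> bT0 bTt K0 p0 pq Kpq u0.
have q0 : 0 < q by exact: (lt_le_trans p0 pq).
set r := p / q.
have r0 : 0 <= r by rewrite divr_ge0 // ltW.
have r1 : r <= 1 by rewrite ler_pdivrMr // mul1r.
have Kr : K * r <= 1 by rewrite mulrA ler_pdivrMr // mul1r.
have e1 : expR (u * p) <= r * expR (u * q) + (1 - r).
  have -> : u * p = r * (u * q) by rewrite /r; field; rewrite gt_eqF.
  exact: expR_conv.
have e2 : 1 <= expR (u * q) by rewrite -expR0 ler_expR mulr_ge0 // ltW.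
rewrite !mul0r expR0 mulr1.
set E1 := expR (u * p) in e1 *.
set E2 := expR (u * q) in e1 e2 *.
have h1 : bT * K * (E1 - 1) <= bT * K * (r * (E2 - 1)).
  by apply: ler_wpM2l; [exact: mulr_ge0 | lra].
have h2 : bT * K * (r * (E2 - 1)) <= bT * (E2 - 1).
  have hb : 0 <= bT * (E2 - 1) by apply: mulr_ge0; lra.
  have := ler_wpM2l hb Kr.
  have -> : bT * K * (r * (E2 - 1)) = bT * (E2 - 1) * (K * r) by ring.
  by rewrite mulr1.
have h3 : bT * (E2 - 1) <= bt * (E2 - 1) by apply: ler_wpM2r; lra.
nra.
Qed.

Lemma key (R : realType) (a g tr : R) : 0 < a -> 1 <= tr -> 0 <= g -> g <= 4 * a / 3 ->
  2 * a * (tr + 1) * (2 * a * tr) ^+ 2 <= (2 * a * (tr + 1) - g) ^+ 3.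
Proof.
move=> a0 t1 g0 ga.
set D := 2 * a * (tr + 1) - g.
set Y := 2 * a * (tr + 1/3).
have YD : Y <= D by rewrite /Y /D; lra.
have Y0 : 0 < Y by rewrite /Y; apply: mulr_gt0; lra.
have h1 : Y ^+ 3 <= D ^+ 3.
  have D0 : 0 <= D by lra.
  have p1 : 0 <= D - Y by lra.
  have p2 : 0 <= D^+2 + D * Y + Y^+2.
    apply: addr_ge0; [apply: addr_ge0; [exact: sqr_ge0 | apply: mulr_ge0 => //; exact: ltW] | exact: sqr_ge0].
  have := mulr_ge0 p1 p2.
  have -> : (D - Y) * (D ^+ 2 + D * Y + Y ^+ 2) = D^+3 - Y^+3 by ring.
  move=> h; lra.
have h2 : Y ^+ 3 - 2 * a * (tr + 1) * (2 * a * tr) ^+ 2 = 8 * a^+3 * (tr / 3 + 1/27).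
  by rewrite /Y; field.
have : 0 <= 8 * a^+3 * (tr / 3 + 1/27).
  apply: mulr_ge0; last lra.
  by apply: mulr_ge0 => //; apply: exprn_ge0; lra.
lra.
Qed.


Lemma K2_aux (R : realType) (p u w c d : R) : p != 0 -> d != 0 -> u != 0 ->
  w = u * c / d -> (u * p *+ 2)^-1 * (w * p *+ 2) * d = c.
Proof.
move=> p0 d0 u0 ->.
have q0 : u * p *+ 2 != 0 by rewrite -mulr_natr !mulf_neq0 // pnatr_eq0.
have -> : u * c / d * p *+ 2 = (u * p *+ 2) * (c / d) by rewrite mulrnAl; congr (_ *+ 2); ring.
by rewrite mulKf // divfK.
Qed.

Lemma K2_lem (R : realType) (s w c0 D2 : R) : 0 < s -> 0 < w -> 0 < D2 ->
  w = s ^+ 2 * c0 / D2 ->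
  (normal_peak s / normal_peak (Num.sqrt w)) ^+ 2 * D2 = c0.
Proof.
move=> s0 w0 D0 wE.
have pi0 : 0 < pi :> R := pi_gt0 R.
rewrite /normal_peak invrK exprMn exprVn !sqr_sqrtr.
- by apply: K2_aux; rewrite ?gt_eqF ?exprn_gt0.
all: by rewrite ?mulrn_wge0 ?mulr_ge0 ?sqr_ge0 // ltW.
Qed.

Local Close Scope classical_set_scope.

Theorem lemma17 (R : realType) (G a : R) (beta : nat -> R) :
  0 < G ->
  3 * pi * G ^+ 2 / 4 <= a ->
  (forall t, (1 <= t)%N -> 0 < beta t) ->
  (forall t, (1 <= t)%N -> beta t.+1 <= beta t) ->
  forall t, (1 <= t)%N ->
  forall x : R,
    (objective beta a G (Num.sqrt (pi / 2)) t x
      <= objective beta a G (Num.sqrt (pi / 2)) t 0)%E.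
Proof.
move=> G0 Ha bpos bmono t t1 x.
set s := Num.sqrt (pi / 2).
have pi0 : 0 < pi :> R := pi_gt0 R.
have s0 : 0 < s by rewrite sqrtr_gt0 divr_gt0.
have s2 : s ^+ 2 = pi / 2 by rewrite sqr_sqrtr // ltW // divr_gt0.
set g := pi * G ^+ 2.
have g0 : 0 <= g by apply: mulr_ge0; [exact: ltW | exact: sqr_ge0].
have ga : g <= 4 * a / 3 by rewrite /g; lra.
have a0 : 0 < a.
  have : 0 < g by apply: mulr_gt0 => //; exact: exprn_gt0.
  lra.
set tr : R := t%:R.
have tr1 : 1 <= tr by rewrite /tr ler1n.
have eT : t.+1%:R = tr + 1 by rewrite /tr -natr1.
set c0 := 2 * a * t.+1%:R.
set D2 := c0 - 2 * G ^+ 2 * s ^+ 2.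
have D2E : D2 = 2 * a * (tr + 1) - g by rewrite /D2 /c0 eT s2 /g; field.
have c0E : c0 = 2 * a * (tr + 1) by rewrite /c0 eT.
have D0 : 0 < D2 by rewrite D2E; nra.
set w := s ^+ 2 * c0 / D2.
have w0 : 0 < w by rewrite /w divr_gt0 // mulr_gt0 ?exprn_gt0 // c0E; nra.
set K := normal_peak s / normal_peak (Num.sqrt w).
have K0 : 0 <= K by rewrite /K divr_ge0 // normal_peak_ge0.
have bT0 : 0 < beta t.+1 by apply: bpos.
have objE : forall y, objective beta a G s t y =
    (beta t.+1 * (K * expR (y ^+ 2 / D2)) - beta t * expR (y ^+ 2 / (2 * a * tr)))%:E.
  move=> y; rewrite /objective /ft.
  under eq_integral do rewrite EFinM.
  rewrite ge0_integralZl //; first last.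
  - by rewrite lee_fin ltW.
  - by apply: (@measurableT_comp _ _ _ _ _ _ EFin) => //; exact: mes.
  by rewrite int_gauss // -EFinM -EFinB.
rewrite !objE lee_fin.
set m := 2 * a * tr.
have m0 : 0 < m by rewrite /m; nra.
have K2 : K ^+ 2 * D2 = c0 by apply: K2_lem.
have Km : K * m <= D2.
  rewrite leNgt; apply/negP => h.
  have h1 : D2 ^+ 2 < (K * m) ^+ 2 by rewrite !expr2; nra.
  have h2 : D2 ^+ 3 < c0 * m ^+ 2.
    have -> : c0 * m ^+ 2 = (K * m) ^+ 2 * D2 by rewrite -K2; ring.
    have -> : D2 ^+ 3 = D2 ^+ 2 * D2 by ring.
    by rewrite ltr_pM2r.
  have := @key R a g tr a0 tr1 g0 ga.
  rewrite -D2E -c0E -/m; lra.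
have pq : D2^-1 <= m^-1.
  rewrite lef_pV2 ?posrE // D2E /m; lra.
have Kpq : K * D2^-1 <= m^-1.
  have -> : K * D2^-1 = (K * m) / (D2 * m) by field; rewrite !gt_eqF.
  have -> : m^-1 = D2 / (D2 * m) by field; rewrite !gt_eqF.
  by rewrite ler_pM2r // invr_gt0 mulr_gt0.
have e0 : (0 : R) ^+ 2 = 0 by rewrite expr2 mulr0.
have := @final_ineq R _ _ _ _ _ _ (ltW bT0) (bmono t t1) K0 (_ : 0 < D2^-1) pq Kpq (sqr_ge0 x).
rewrite !mul0r e0 !mul0r.
apply; by rewrite invr_gt0.
Qed.
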